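(* Fix $L\in\mathbb Z$ and work on $Y_L=\mathbb R\times(0,2^L]\times\mathbb R$ with the objects described in the context. The quadruple $(Y_L,\mu,\nu,\mathcal C)$, where $\mathcal C(A)=\mathcal M(\mathcal N(\mathcal Q(A)))$ and $\mathcal E=\mathcal D_L$, satisfies the crop condition for every choice of parameters $\Phi\ge2$, $K\ge1$.
   Context: Dyadic intervals $I(m,l)=(2^lm,2^l(m+1)]$; tiles $H(m,l,n)=I(m,l)\times(2^{l-1},2^l]\times I(n,-l)$. $\mathcal D_L$ = strips $D(m,l)=I(m,l)\times(0,2^l]\times\mathbb R$ with $l\le L$, $\sigma(D(m,l))=2^l$. $\mathcal T_L$ = trees $T(m,l,n)=\bigcup_{l'\le l}\bigcup_{m':\,I(m',l')\subseteq I(m,l)}H(m',l',N(n,l'))$ with $l\le L$ ($N(n,l')$ the integer with $I(n,-l)\subseteq I(N(n,l'),-l')$), $\tau(T(m,l,n))=2^l$. Outer measures on $Y_L$: $\mu(A)=\inf\{\sum_{S\in\mathcal S'}\sigma(S):\mathcal S'\subseteq\mathcal D_L,A\subseteq\bigcup\mathcal S'\}$, $\nu$ likewise from $(\mathcal T_L,\tau)$. $\pi$ = projection onto first coordinate, $|\cdot|$ Lebesgue measure. For $E\in\mathcal D_L$, $E_+=\{(x,s,\xi)\in E:s>\sigma(E)/2\}$. $\mathcal Q(A)=\{E\in\mathcal D_L:E_+\cap A\ne\varnothing\}$. For $\mathcal D_1\subseteq\mathcal D_L$: $\mathcal N(\mathcal D_1)=\{E\in\mathcal D_L:|\pi(E)\cap\pi(\bigcup\mathcal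 D_1)|\ge|\pi(E)|/2\}$; $\mathcal M(\mathcal D_1)$ = elements of $\mathcal D_1$ maximal under inclusion. $\mathbf B_{\mathcal C}(A)=\bigcup_{E\in\mathcal C(A)}E$. A $\mu$-covering function with parameter $\Phi$: a map $\mathcal C$ assigning to each $A$ a subcollection of pairwise disjoint elements of $\mathcal E$ with $A\subseteq\mathbf B_{\mathcal C}(A)$, $\mu(\mathbf B_{\mathcal C}(A))\le\Phi\mu(A)$, $\mathbf B_{\mathcal C}$ monotone. A collection $\mathcal A$ of pairwise disjoint sets is $\nu$-Carathéodory (parameter $K$) if $\sum_{A\in\mathcal A}\nu(U\cap A)\le K\nu(U\cap\bigcup\mathcal A)$ for all $U$. Crop condition (parameters $\Phi,K$): $\mathcal C$ is a $\mu$-covering function with parameter $\Phi$, and for every collection $\mathcal A\subseteq\mathcal E$ there exists a $\nu$-Carathéodory (parameter $K$) subcollection $\mathcal D'\subseteq\mathcal A$ such that for every $F$ disjoint from $\bigcup_{D\in\mathcal D'}D$, $\mathbf B_{\mathcal C}(F)=\bigcup_{E\in\mathcal C(F)\setminus\mathcal A}E$. *)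

(* Defs.v *)
From HB Require Import structures.
From mathcomp Require Import all_boot all_order all_algebra.
From mathcomp Require Import all_classical all_reals all_analysis.
Set Implicit Arguments. Unset Strict Implicit. Unset Printing Implicit Defensive.
Import Order.TTheory GRing.Theory Num.Theory.
Local Open Scope classical_set_scope.
Local Open Scope ring_scope.

Section Defs.
Variable R : realType.

(* points (x, s, xi) of R x R x R, encoded as ((x, s), xi) *)
Definition pt := (R * R * R)%type.
Definition pi1 (p : pt) : R := p.1.1.

Definition dI (m l : int) : set R :=
  [set x | (2:R) ^ l * m%:~R < x /\ x <= (2:R) ^ l * (m + 1)%:~R].

Definition YL (L : int) : set pt := [set p | 0 < p.1.2 /\ p.1.2 <= (2:R) ^ L].

Definition strip (j : int * int) : set pt :=
  [set p | dI j.1 j.2 p.1.1 /\ 0 < p.1.2 /\ p.1.2 <= (2:R) ^ j.2].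
Definition stripIdx (L : int) : set (int * int) := [set j | (j.2 <= L)%R].
Definition sigma (j : int * int) : R := (2:R) ^ j.2.

Definition strip_plus (j : int * int) : set pt :=
  [set p | strip j p /\ sigma j / 2 < p.1.2].

Definition tile (m l n : int) : set pt :=
  [set p | dI m l p.1.1 /\ (2:R) ^ (l - 1) < p.1.2 /\ p.1.2 <= (2:R) ^ l
           /\ dI n (- l) p.2].

(* trees T(m,l,n), indexed by ((m,l),n); N(n,l') is the (unique) n' with
   I(n,-l) included in I(n',-l') *)
Definition tree (t : int * int * int) : set pt :=
  let: (m, l, n) := t in
  [set p | exists m' l' n' : int, [/\ (l' <= l)%R, dI m' l' `<=` dI m l,
           dI n (- l) `<=` dI n' (- l') & tile m' l' n' p]].
Definition treeIdx (L : int) : set (int * int * int) := [set t | (t.1.2 <= L)%R].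
Definition tau (t : int * int * int) : R := (2:R) ^ t.1.2.

Definition mu (L : int) (A : set pt) : \bar R :=
  ereal_inf [set S | exists J : set (int * int),
    [/\ J `<=` stripIdx L, A `<=` \bigcup_(j in J) strip j
      & S = \esum_(j in J) (sigma j)%:E]].
Definition nu (L : int) (A : set pt) : \bar R :=
  ereal_inf [set S | exists J : set (int * int * int),
    [/\ J `<=` treeIdx L, A `<=` \bigcup_(t in J) tree t
      & S = \esum_(t in J) (tau t)%:E]].

Definition calQ (L : int) (A : set pt) : set (int * int) :=
  [set j | stripIdx L j /\ strip_plus j `&` A !=set0].
Definition calN (L : int) (D1 : set (int * int)) : set (int * int) :=
  [set j | stripIdx L j /\
     lebesgue_measure (pi1 @` strip j) * (2^-1)%:E <=
     lebesgue_measure (pi1 @` strip j `&` pi1 @` \bigcup_(i in D1) strip i)]%E.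
Definition calM (D1 : set (int * int)) : set (int * int) :=
  [set j | D1 j /\ forall j', D1 j' -> strip j `<=` strip j' -> strip j' = strip j].
Definition calC (L : int) (A : set pt) : set (int * int) :=
  calM (calN L (calQ L A)).

Definition BC (C : set pt -> set (int * int)) (A : set pt) : set pt :=
  \bigcup_(j in C A) strip j.

Definition pairwise_disjoint_strips (S : set (int * int)) : Prop :=
  forall i j, S i -> S j -> strip i <> strip j -> strip i `&` strip j = set0.

Definition mu_covering (L : int) (C : set pt -> set (int * int)) (Phi : R) : Prop :=
  (forall A, A `<=` YL L ->
     [/\ C A `<=` stripIdx L, pairwise_disjoint_strips (C A),
         A `<=` BC C A & (mu L (BC C A) <= Phi%:E * mu L A)%E]) /\
  (forall A A', A `<=` YL L -> A' `<=` YL L -> A `<=` A' -> BC C A `<=` BC C A').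

Definition nu_caratheodory (L : int) (K : R) (Dp : set (int * int)) : Prop :=
  pairwise_disjoint_strips Dp /\
  forall U, U `<=` YL L ->
    (\esum_(j in Dp) nu L (U `&` strip j) <=
     K%:E * nu L (U `&` \bigcup_(j in Dp) strip j))%E.

Definition crop_condition (L : int) (C : set pt -> set (int * int)) (Phi K : R) : Prop :=
  mu_covering L C Phi /\
  forall calA : set (int * int), calA `<=` stripIdx L ->
    exists Dp : set (int * int),
      [/\ Dp `<=` calA, nu_caratheodory L K Dp &
          forall F, F `<=` YL L -> F `&` \bigcup_(j in Dp) strip j = set0 ->
            BC C F = \bigcup_(j in C F `\` calA) strip j].

End Defs.

(* Main.v *)
Require Import Defs.
From HB Require Import structures.
From mathcomp Require Import all_boot all_order all_algebra.
From mathcomp Require Import all_classical all_reals all_analysis.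
From mathcomp Require Import zify ring lra.
Import Order.TTheory GRing.Theory Num.Theory.
Local Open Scope classical_set_scope.
Local Open Scope ring_scope.

Section P1.
Variable R : realType.
Local Notation dI := (@dI R).
Local Notation strip := (@strip R).

Lemma p2_gt0 (l : int) : 0 < (2:R) ^ l.
Proof. by apply: exprz_gt0. Qed.

Lemma dIE m l x : dI m l x <-> (m%:~R < x / 2 ^ l /\ x / 2 ^ l <= (m+1)%:~R).
Proof.
have h := p2_gt0 l.
rewrite /Defs.dI /= ltr_pdivlMr // ler_pdivrMr // ![_ * 2 ^ l]mulrC; by [].
Qed.

Lemma dI_ceil m l x : dI m l x <-> m = Num.ceil (x / 2 ^ l) - 1.
Proof.
rewrite dIE; have := ceil_eq (x / 2 ^ l) (m + 1); rewrite addrK => e.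
split.
  case=> a b; have /eqP -> : Num.ceil (x / 2 ^ l) == m + 1 by rewrite e a b.
  by rewrite addrK.
move=> ->; rewrite subrK; have := ceil_itv (x / 2 ^ l).
by case/andP => a b; split.
Qed.

Lemma dI_uniq m m' l x : dI m l x -> dI m' l x -> m = m'.
Proof. by move=> /dI_ceil -> /dI_ceil ->. Qed.

Lemma dI_ex x l : exists m, dI m l x.
Proof. by exists (Num.ceil (x / 2 ^ l) - 1); apply/dI_ceil. Qed.

Lemma dI_right m l : dI m l (2 ^ l * (m + 1)%:~R).
Proof.
split => //; rewrite ltr_pM2l ?p2_gt0 // ltr_int; lia.
Qed.

Lemma pow_split (l l' : int) : l <= l' ->
  exists d : int, 0 < d /\ (2:R) ^ l' = 2 ^ l * d%:~R.
Proof.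
move=> ll'; set k := `|l' - l|%N.
have ek : l' = l + k%:Z by rewrite /k gez0_abs ?subr_ge0 //; lia.
exists (2 ^+ k)%:Z; split; first by rewrite ltz_nat expn_gt0.
rewrite ek expfzDr // ?pnatr_eq0 //; congr (_ * _).
by rewrite -exprnP !rmorphXn.
Qed.

Lemma dI_nest m l m' l' x : l <= l' -> dI m l x -> dI m' l' x ->
  dI m l `<=` dI m' l'.
Proof.
move=> ll' /dIE [a b] /dIE [c d'] z /dIE [e f]; apply/dIE.
have [d [d0 ed]] := pow_split _ _ ll'.
have hl := p2_gt0 l; have dR : 0 < (d%:~R : R) by rewrite ltr0z.
move: c d'; rewrite ed invfM mulrA.
set y := x / 2 ^ l; set w := z / 2 ^ l.
rewrite ltr_pdivlMr // ler_pdivrMr // -!intrM => c d'.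
have i1 : (m' * d < m + 1)%R by rewrite -(ltr_int R); exact: lt_le_trans c b.
have i2 : (m < (m' + 1) * d)%R by rewrite -(ltr_int R); exact: lt_le_trans a d'.
rewrite mulrA -/w ltr_pdivlMr // ler_pdivrMr // -!intrM; split.
  apply: le_lt_trans e; rewrite ler_int; lia.
apply: le_trans f _; rewrite ler_int; lia.
Qed.


Lemma strip_sub (i j : int * int) :
  strip i `<=` strip j <-> (i.2 <= j.2 /\ dI i.1 i.2 `<=` dI j.1 j.2).
Proof.
split.
  move=> h; have hx := dI_right i.1 i.2; set x := _ * _ in hx.
  have /h [_ [_ hs]] : strip i ((x, 2 ^ i.2), 0).
    by split => //; split => //; exact: p2_gt0.
  split; first by rewrite -(ler_eXz2l (_ : 1 < (2:R))) ?ltr1n.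
  move=> y hy.
  have /h [] // : strip i ((y, 2 ^ i.2), 0).
  by split => //; split => //; exact: p2_gt0.
case=> hl hd p [a [b c]]; split; first exact: hd.
split => //; apply: (le_trans c).
by rewrite (ler_eXz2l (_ : 1 < (2:R))) ?ltr1n.
Qed.

Lemma strip_nest (i j : int * int) x : i.2 <= j.2 -> dI i.1 i.2 x -> dI j.1 j.2 x ->
  strip i `<=` strip j.
Proof. by move=> h a b; apply/strip_sub; split => //; exact: dI_nest a b. Qed.

Lemma strip_cmp (i j : int * int) : strip i `&` strip j !=set0 ->
  strip i `<=` strip j \/ strip j `<=` strip i.
Proof.
case=> p [[a _] [b _]].
have [h|h] := lerP i.2 j.2.
  by left; exact: strip_nest h a b.
by right; apply: strip_nest (ltW h) b a.
Qed.

Lemma strip_inj (i j : int * int) : strip i = strip j -> i = j.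
Proof.
move=> e.
have [l1 d1] : i.2 <= j.2 /\ dI i.1 i.2 `<=` dI j.1 j.2 by apply/strip_sub; rewrite e.
have [l2 _] : j.2 <= i.2 /\ dI j.1 j.2 `<=` dI i.1 i.2 by apply/strip_sub; rewrite e.
have el : i.2 = j.2 by apply/eqP; rewrite eq_le l1 l2.
have := d1 _ (dI_right i.1 i.2); rewrite -el => /(dI_uniq _ _ _ _ (dI_right i.1 i.2)) em.
by case: i j el em {e d1 l1 l2} => [? ?] [? ?] /= -> ->.
Qed.

Lemma strip_ne (i : int * int) : strip i !=set0.
Proof.
exists ((2 ^ i.2 * (i.1 + 1)%:~R, 2 ^ i.2), 0); split; first exact: dI_right.
by split => //; exact: p2_gt0.
Qed.

Lemma level_ex (s : R) : 0 < s -> exists l : int, 2 ^ (l - 1) < s /\ s <= 2 ^ l.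
Proof.
move=> s0.
have hb : 0 <= s + s^-1 by rewrite addr_ge0 // ?invr_ge0 ltW.
set N := Num.Def.archi_bound (s + s^-1).
have hN := archi_boundP hb; rewrite -/N in hN.
have h2N : (N%:R : R) <= 2 ^ (N%:Z).
  by rewrite -exprnP -natrX ler_nat ltnW // ltn_expl.
have sN : s <= 2 ^ (N%:Z).
  apply: le_trans h2N; apply: ltW; apply: le_lt_trans hN.
  by rewrite lerDl invr_ge0 ltW.
have sN' : 2 ^ (- N%:Z) < s.
  rewrite -invr_expz -[s]invrK ltf_pV2 ?posrE ?invr_gt0 ?p2_gt0 //.
  apply: lt_le_trans h2N; apply: le_lt_trans hN; by rewrite lerDr ltW.
have ex : exists k : nat, s <= 2 ^ (k%:Z - N%:Z).
  by exists (N + N)%N; rewrite PoszD addrK.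
case: (ex_minnP ex) => k hk hmin.
exists (k%:Z - N%:Z); split => //.
case: k hk hmin => [|k] hk hmin.
  by move: hk; rewrite sub0r leNgt sN'.
rewrite ltNge; apply/negP => h.
have := hmin k; rewrite (_ : k%:Z - N%:Z = k.+1%:Z - N%:Z - 1); last by lia.
by move/(_ h); rewrite ltnn.
Qed.

End P1.
Arguments p2_gt0 {R}. Arguments dIE {R}. Arguments dI_ceil {R}. Arguments dI_uniq {R}.
Arguments dI_ex {R}. Arguments dI_right {R}. Arguments pow_split {R}. Arguments dI_nest {R}.
Arguments strip_sub {R}. Arguments strip_nest {R}. Arguments strip_cmp {R}. Arguments strip_inj {R}.
Arguments strip_ne {R}. Arguments level_ex {R}.

Section P2.
Variable R : realType.
Local Notation dI := (@dI R).
Local Notation strip := (@strip R).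
Local Notation leb := (@lebesgue_measure R).
Local Open Scope ereal_scope.

Definition Gs (P : set (int * int)) (F : int * int -> set R) (n : nat) : set R :=
  match pickle_inv n with Some i => if i \in P then F i else set0 | None => set0 end.

Definition ga (P : set (int * int)) (a : int * int -> \bar R) (n : nat) : \bar R :=
  match pickle_inv n with Some i => if i \in P then a i else 0 | None => 0 end.

Lemma bigcup_Gs P F : \bigcup_(i in P) F i = \bigcup_n Gs P F n.
Proof.
apply/seteqP; split => x.
  case=> i Pi Fx; exists (pickle i) => //; rewrite /Gs pickleK_inv.
  by rewrite ifT // inE.
case=> n _; rewrite /Gs; case: (pickle_inv n) => [i|//].
by case: ifPn => [/set_mem Pi Fx|//]; exists i.
Qed.

Lemma ga_ge0 P a : (forall i, 0 <= a i) -> forall n, 0 <= ga P a n.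
Proof. by move=> a0 n; rewrite /ga; case: pickle_inv => // i; case: ifP. Qed.

Lemma esum_pick P (a : int * int -> \bar R) : (forall i, 0 <= a i) ->
  \esum_(i in P) a i = \sum_(n <oo) ga P a n.
Proof.
move=> a0; rewrite nneseries_esumT; last exact: ga_ge0.
have -> : \esum_(n in [set: nat]) ga P a n = \esum_(n in range (pickle : int * int -> nat)) ga P a n.
  rewrite [RHS]esum_mkcond; apply: eq_esum => n _.
  case: ifPn => // /negP nr; rewrite /ga.
  case e : (pickle_inv n) => [i|//]; exfalso; apply: nr; rewrite inE.
  by exists i => //; have := @pickle_invK (int * int)%type n; rewrite e.
rewrite esum_image; last by move=> x y _ _; apply: (pcan_inj pickleK).
rewrite esum_mkcond; apply: eq_esum => i _.
by rewrite /ga pickleK_inv.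
Qed.

Lemma dI_itv m l : dI m l = [set` `](2 ^ l * m%:~R)%R, (2 ^ l * (m + 1)%:~R)%R]%R].
Proof.
apply/seteqP; split => x /=; rewrite in_itv /=; first by case=> -> ->.
by case/andP => ? ?; split.
Qed.

Lemma dI_meas m l : measurable (dI m l).
Proof. by rewrite dI_itv; apply: measurable_itv. Qed.

Lemma dI_leb m l : leb (dI m l) = ((2:R) ^ l)%:E.
Proof.
rewrite dI_itv lebesgue_measure_itv /= ifT.
  by rewrite -EFinB; congr (_%:E); rewrite intrD mulrDr addrAC subrr add0r mulr1.
by rewrite lte_fin ltr_pM2l ?p2_gt0 // ltr_int ltzD1.
Qed.

Lemma Gs_meas P n : measurable (Gs P (fun i => dI i.1 i.2) n).
Proof. rewrite /Gs; case: pickle_inv => [i|//]; case: ifP => // _; exact: dI_meas. Qed.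

Lemma bigcup_dI_meas P : measurable (\bigcup_(i in P) dI i.1 i.2).
Proof. by rewrite bigcup_Gs; apply: bigcupT_measurable => n; apply: Gs_meas. Qed.

Lemma disj_sum P (X : set R) : measurable X ->
  (forall i j, P i -> P j -> i <> j -> dI i.1 i.2 `&` dI j.1 j.2 = set0) ->
  \esum_(i in P) leb (dI i.1 i.2 `&` X) <= leb X.
Proof.
move=> mX dis; rewrite esum_pick; last by move=> i; apply: measure_ge0.
set G := fun n => Gs P (fun i => dI i.1 i.2) n `&` X.
have eG n : ga P (fun i => leb (dI i.1 i.2 `&` X)) n = leb (G n).
  rewrite /ga /G /Gs; case: pickle_inv => [i|]; last by rewrite set0I measure0.
  by case: ifP => // _; rewrite set0I measure0.
under eq_eseriesr do rewrite eG.
have mG n : measurable (G n) by apply: measurableI => //; apply: Gs_meas.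
have tG : trivIset setT G.
  move=> n k _ _ [x [[gn _] [gk _]]]; move: gn gk; rewrite /Gs.
  case en : (pickle_inv n) => [i|//]; case: ifPn => // /set_mem Pi xi.
  case ek : (pickle_inv k) => [j|//]; case: ifPn => // /set_mem Pj xj.
  have eij : i = j.
    apply: contrapT => nij; have := dis _ _ Pi Pj nij.
    by move/seteqP => [/(_ x (conj xi xj))].
  by rewrite -(@pickle_invK (int * int)%type n) -(@pickle_invK (int * int)%type k) en ek eij.
have := measure_bigcup leb setT G (fun n _ => mG n) tG.
under [X in _ = X -> _]eq_eseriesl do rewrite mem_setT.
move=> <-; apply: le_measure; rewrite ?inE //; first exact: bigcupT_measurable.
by move=> x [n _ []].
Qed.

Lemma subadd P : leb (\bigcup_(i in P) dI i.1 i.2) <= \esum_(i in P) leb (dI i.1 i.2).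
Proof.
rewrite esum_pick; last by move=> i; apply: measure_ge0.
have eG n : ga P (fun i => leb (dI i.1 i.2)) n = leb (Gs P (fun i => dI i.1 i.2) n).
  rewrite /ga /Gs; case: pickle_inv => [i|]; last by rewrite measure0.
  by case: ifP => // _; rewrite measure0.
under eq_eseriesr do rewrite eG.
apply: measure_sigma_subadditive; first exact: Gs_meas.
  exact: bigcup_dI_meas.
by rewrite bigcup_Gs.
Qed.

End P2.

Section P2b.
Variable R : realType.
Local Notation dI := (@dI R).
Local Notation strip := (@strip R).
Local Open Scope ereal_scope.

Lemma esumZl P (a : int * int -> \bar R) (x : R) : (0 <= x)%R -> (forall i, 0 <= a i) ->
  \esum_(i in P) (x%:E * a i) = x%:E * \esum_(i in P) a i.
Proof.
move=> x0 a0; rewrite !esum_pick //; last by move=> i; rewrite mule_ge0.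
rewrite -nneseriesZl; last by move=> i _; apply: ga_ge0.
apply: eq_eseriesr => n _; rewrite /ga; case: pickle_inv => [i|]; last by rewrite mule0.
by case: ifP => _ //; rewrite mule0.
Qed.

Lemma pi1_strip j : (@pi1 R) @` strip j = dI j.1 j.2.
Proof.
apply/seteqP; split => x; first by case=> p [hp _] <-.
move=> hx; exists ((x, 2 ^ j.2), 0%R) => //; split => //; split => //; exact: p2_gt0.
Qed.

Lemma pi1_bigcup (D : set (int * int)) :
  (@pi1 R) @` (\bigcup_(i in D) strip i) = \bigcup_(i in D) dI i.1 i.2.
Proof.
apply/seteqP; split => x; first by case=> p [i Di [hp _]] <-; exists i.
case=> i Di hx; exists ((x, 2 ^ i.2), 0%R) => //; exists i => //.
split => //; split => //; exact: p2_gt0.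
Qed.

End P2b.
Arguments bigcup_Gs {R}. Arguments esum_pick {R}. Arguments dI_itv {R}. Arguments dI_meas {R}.
Arguments dI_leb {R}. Arguments bigcup_dI_meas {R}. Arguments disj_sum {R}. Arguments subadd {R}.
Arguments esumZl {R}. Arguments pi1_strip {R}. Arguments pi1_bigcup {R}. Arguments ga_ge0 {R}. Arguments Gs_meas {R}.

Section P3.
Variable R : realType.
Variable L : int.
Local Notation dI := (@dI R).
Local Notation strip := (@strip R).
Local Notation leb := (@lebesgue_measure R).
Local Notation calN := (@calN R L).
Local Notation calM := (@calM R).
Local Notation calQ := (@calQ R L).
Local Notation sigma := (@sigma R).
Local Notation pds := (@pairwise_disjoint_strips R).

Definition Xs (D : set (int * int)) : set R := \bigcup_(i in D) dI i.1 i.2.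

Lemma calN_E D j : calN D j <-> stripIdx L j /\
  (((2:R) ^ j.2)%:E * (2^-1)%:E <= leb (dI j.1 j.2 `&` Xs D))%E.
Proof. by rewrite /Defs.calN /= pi1_strip pi1_bigcup dI_leb. Qed.

Lemma sub_same (i j : int * int) : i.2 = j.2 -> strip i `<=` strip j -> i = j.
Proof.
move=> el /strip_sub [_ d]; have := d _ (dI_right i.1 i.2).
rewrite -el => /(dI_uniq _ _ _ _ (dI_right i.1 i.2)) em.
by case: i j el em {d} => [? ?] [? ?] /= -> ->.
Qed.

Lemma max_ex (D : set (int * int)) j : D `<=` stripIdx L -> D j ->
  exists k, calM D k /\ strip j `<=` strip k.
Proof.
move=> DL.
suff h : forall n : nat, forall j, D j -> (`|L - j.2|%N < n)%N ->
    exists k, calM D k /\ strip j `<=` strip k.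
  by move=> Dj; apply: (h (`|L - j.2|%N).+1).
elim=> [j0 _ //|n IH] j0 Dj hn.
have [Mj|nMj] := pselect (calM D j0); first by exists j0; split.
have [j' [Dj' [sj nej]]] : exists j', D j' /\ strip j0 `<=` strip j' /\ strip j' <> strip j0.
  apply: contrapT => h; apply: nMj; split => // j' Dj' sj.
  by apply: contrapT => ne; apply: h; exists j'.
have [l1 _] := (strip_sub j0 j').1 sj.
have lt : j0.2 < j'.2.
  by rewrite lt_neqAle l1 andbT; apply/eqP => e; apply: nej; rewrite (sub_same _ _ e sj).
have jL := DL _ Dj'; rewrite /stripIdx /= in jL.
have hn' : (`|L - j'.2|%N < n)%N.
  have e1 := @gez0_abs (L - j'.2) ltac:(lia).
  have e0 := @gez0_abs (L - j0.2) ltac:(lia).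
  rewrite -ltz_nat e1; rewrite -ltz_nat e0 in hn; lia.
have [k [Mk sk]] := IH j' Dj' hn'.
by exists k; split => //; exact: subset_trans sj sk.
Qed.

Lemma M_disj D : pds (calM D).
Proof.
move=> i j [Di Mi] [Dj Mj] ne; rewrite -subset0 => p hp.
have [h|h] := strip_cmp i j (ex_intro _ p hp).
  by exfalso; apply: ne; symmetry; apply: Mi.
by exfalso; apply: ne; apply: Mj.
Qed.

Lemma pds_dI P : pds P -> forall i j, P i -> P j -> i <> j ->
  dI i.1 i.2 `&` dI j.1 j.2 = set0.
Proof.
move=> pd i j Pi Pj ne; rewrite -subset0 => x [xi xj].
have hs := pd i j Pi Pj (fun e => ne (strip_inj _ _ e)).
have [p sp] := strip_ne (R:=R) i; have [q sq] := strip_ne (R:=R) j.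
have [l|l] := lerP i.2 j.2.
  have sij := strip_nest _ _ _ l xi xj.
  by move: hs => /seteqP [/(_ p (conj sp (sij _ sp)))].
have sji := strip_nest _ _ _ (ltW l) xj xi.
by move: hs => /seteqP [/(_ q (conj (sji _ sq) sq))].
Qed.

Lemma Q_sub_N A : calQ A `<=` calN (calQ A).
Proof.
move=> j Qj; apply/calN_E; split; first by case: Qj.
rewrite setIidl; last by move=> x hx; exists j.
rewrite dI_leb -EFinM lee_fin; apply: ler_piMr; [exact: ltW (p2_gt0 _)|by rewrite invf_le1 ?ler1n].
Qed.

Lemma pow_m1 (l : int) : (2:R) ^ (l - 1) = 2 ^ l / 2.
Proof. by rewrite expfzDr // -invr_expz expr1z. Qed.

Lemma cover_A A : A `<=` YL L -> A `<=` BC (@calC R L) A.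
Proof.
move=> AY p Ap; have [s0 sL] := AY p Ap.
have [l [h1 h2]] := level_ex _ s0.
have [m hm] := dI_ex p.1.1 l.
have lL : l <= L.
  have : (2:R) ^ (l - 1) < 2 ^ L by apply: lt_le_trans sL.
  rewrite (ltr_eXz2l (_ : 1 < (2:R))) ?ltr1n //; lia.
have Qj : calQ A (m, l).
  split => //; exists p; split => //; split => //.
  by rewrite /sigma /= -pow_m1.
have [k [Mk sk]] := max_ex (calN (calQ A)) _ (fun i (h : calN _ i) => proj1 h) (Q_sub_N _ _ Qj).
by exists k => //; apply: sk.
Qed.

Lemma N_mono D D' : D `<=` D' -> calN D `<=` calN D'.
Proof.
move=> s j /calN_E [h1 h2]; apply/calN_E; split => //; apply: le_trans h2 _.
apply: le_measure; rewrite ?inE.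
- by apply: measurableI; [exact: dI_meas|exact: bigcup_dI_meas].
- by apply: measurableI; [exact: dI_meas|exact: bigcup_dI_meas].
by apply: setIS => x [i Di hx]; exists i => //; apply: s.
Qed.

Lemma Q_mono (A A' : set (pt R)) : A `<=` A' -> calQ A `<=` calQ A'.
Proof. by move=> s j [jL [p [hp Ap]]]; split => //; exists p; split => //; apply: s. Qed.

Lemma BC_mono A A' : A `<=` A' -> BC (@calC R L) A `<=` BC (@calC R L) A'.
Proof.
move=> s p [k [Nk _] hk].
have [k' [Mk' sk']] := max_ex (calN (calQ A')) _ (fun i (h : calN _ i) => proj1 h) (N_mono _ _ (Q_mono _ _ s) _ Nk).
by exists k' => //; apply: sk'.
Qed.

End P3.
Arguments Xs {R}. Arguments calN_E {R}. Arguments sub_same {R}. Arguments max_ex {R}.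
Arguments M_disj {R}. Arguments pds_dI {R}. Arguments Q_sub_N {R}. Arguments pow_m1 {R}.
Arguments cover_A {R}. Arguments N_mono {R}. Arguments Q_mono {R}. Arguments BC_mono {R}.

Section P4.
Variable R : realType.
Variable L : int.
Local Notation dI := (@dI R).
Local Notation strip := (@strip R).
Local Notation leb := (@lebesgue_measure R).
Local Notation calN := (@calN R L).
Local Notation calM := (@calM R).
Local Notation calQ := (@calQ R L).
Local Notation sigma := (@sigma R).
Local Notation pds := (@pairwise_disjoint_strips R).
Local Open Scope ereal_scope.

Let h20 : (0 : \bar R) <= 2%:E. Proof. by rewrite lee_fin. Qed.
Let h2i : (0 : \bar R) <= (2^-1)%:E. Proof. by rewrite lee_fin. Qed.

Lemma XQ_sub A J : A `<=` \bigcup_(j in J) strip j ->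
  Xs (calQ A) `<=` \bigcup_(j in J) dI j.1 j.2.
Proof.
move=> AJ x [i [iL [p [[sp hp] Ap]]] xi].
have [S JS Sp] := AJ p Ap.
have lvl : (i.2 <= S.2)%R.
  have : ((2:R) ^ (i.2 - 1) < 2 ^ S.2)%R.
    by rewrite pow_m1; apply: lt_le_trans hp Sp.2.2.
  rewrite (ltr_eXz2l (_ : (1 < (2:R))%R)) ?ltr1n //; lia.
have sub := strip_nest _ _ _ lvl sp.1 Sp.1.
by exists S => //; apply: ((strip_sub i S).1 sub).2 xi.
Qed.

Lemma key_bound A J : J `<=` stripIdx L -> A `<=` \bigcup_(j in J) strip j ->
  \esum_(k in calC L A) (sigma k)%:E <= 2%:E * \esum_(j in J) (sigma j)%:E.
Proof.
move=> JL AJ.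
pose X := @Xs R (calQ A).
have mX : measurable X by apply: bigcup_dI_meas.
have e1 : \esum_(k in calC L A) (sigma k)%:E <=
          \esum_(k in calC L A) (2%:E * leb (dI k.1 k.2 `&` X)).
  apply: le_esum => k [/(calN_E L) [_ h] _].
  have := lee_wpmul2l h20 h.
  suff -> : 2%:E * ((2 ^ k.2)%:E * (2^-1)%:E) = (sigma k)%:E by [].
  by rewrite -!EFinM mulrC -mulrA mulVf ?mulr1.
apply: le_trans e1 _; rewrite esumZl //; try (by move=> i; apply: measure_ge0).
apply: lee_wpmul2l => //.
apply: le_trans (disj_sum _ X mX (pds_dI _ (M_disj _)))  _.
apply: (@le_trans _ _ (leb (\bigcup_(j in J) dI j.1 j.2))).
  apply: le_measure; rewrite ?inE //; first exact: bigcup_dI_meas.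
  exact: XQ_sub AJ.
apply: le_trans (subadd J) _.
by apply: le_esum => j _; rewrite dI_leb.
Qed.

Lemma mu_ge0 (A : set (pt R)) : 0 <= mu L A.
Proof.
apply: le_ereal_inf_tmp => y [J [_ _ ->]].
by apply: esum_ge0 => j _; rewrite lee_fin; exact: ltW (p2_gt0 _).
Qed.

Lemma mu_cov (Phi : R) : (2 <= Phi)%R -> mu_covering L (@calC R L) Phi.
Proof.
move=> hPhi; split; last by move=> A A' _ _; exact: BC_mono.
move=> A AY; split.
- by move=> k [[kL _] _].
- exact: M_disj.
- exact: cover_A.
have h1 : mu L (BC (@calC R L) A) <= \esum_(k in calC L A) (sigma k)%:E.
  by apply: ereal_inf_lbound; exists (calC L A); split => //; move=> k [[]].
set E := \esum_(k in calC L A) (sigma k)%:E in h1 *.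
have h2 : E * (2^-1)%:E <= mu L A.
  apply: le_ereal_inf_tmp => _ [J [JL AJ ->]].
  have := lee_wpmul2r h2i (key_bound A J JL AJ).
  by rewrite muleAC -EFinM mulfV ?mul1e.
have h3 : E <= 2%:E * mu L A.
  have := lee_wpmul2l h20 h2.
  by rewrite muleCA -EFinM mulfV ?mule1.
apply: le_trans h1 (le_trans h3 _).
by apply: lee_wpmul2r; [exact: mu_ge0|rewrite lee_fin].
Qed.

End P4.
Arguments XQ_sub {R}. Arguments key_bound {R}. Arguments mu_ge0 {R}. Arguments mu_cov {R}.

Section P5.
Variable R : realType.
Variable L : int.
Local Notation dI := (@dI R).
Local Notation strip := (@strip R).
Local Notation leb := (@lebesgue_measure R).
Local Notation calN := (@calN R L).
Local Notation calM := (@calM R).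
Local Notation calQ := (@calQ R L).
Local Notation sigma := (@sigma R).

Lemma CF_disj (calA : set (int * int)) (F : set (pt R)) : calA `<=` stripIdx L ->
  F `&` \bigcup_(j in calM calA) strip j = set0 ->
  forall E, calC L F E -> ~ calA E.
Proof.
move=> AL hF E [NE ME] AE.
have [D [MD sED]] := max_ex (R:=R) L calA E AL AE.
have [_ hN] := (calN_E (R:=R) L _ _).1 NE.
have [x [xE [E' QE' xE']]] : dI E.1 E.2 `&` Xs (calQ F) !=set0.
  apply/set0P/negP => /eqP h0; move: hN; rewrite h0 measure0 -EFinM lee_fin.
  by rewrite leNgt mulr_gt0 ?p2_gt0 ?invr_gt0.
have [E'L [q [[sq hq] Fq]]] := QE'.
have [ED dED] := (strip_sub E D).1 sED.
have [l|l] := lerP E'.2 D.2.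
  have sub := strip_nest _ _ _ l xE' (dED _ xE).
  have : (F `&` \bigcup_(j in calM calA) strip j) q by split => //; exists D => //; apply: sub.
  by rewrite hF.
have sub : strip E `<=` strip E' by apply: strip_nest (le_trans ED (ltW l)) xE xE'.
have := ME E' (Q_sub_N L F _ QE') sub => /strip_inj eE.
by move: l; rewrite eE ltNge ED.
Qed.

Lemma BC_eq (calA : set (int * int)) (F : set (pt R)) : calA `<=` stripIdx L ->
  F `&` \bigcup_(j in calM calA) strip j = set0 ->
  BC (@calC R L) F = \bigcup_(j in calC L F `\` calA) strip j.
Proof.
move=> AL hF; rewrite /BC; congr (\bigcup_(j in _) _).
apply/seteqP; split => j; last by case.
by move=> h; split => //; exact: CF_disj h.
Qed.

End P5.
Arguments CF_disj {R}. Arguments BC_eq {R}.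

Section P6.
Variable R : realType.
Variable L : int.
Local Notation dI := (@dI R).
Local Notation strip := (@strip R).
Local Notation tree := (@tree R).
Local Notation tau := (@tau R).
Local Notation leb := (@lebesgue_measure R).

Definition Nf (n l l' : int) : int :=
  Num.ceil ((2 ^ (- l) * (n + 1)%:~R : R) / 2 ^ (- l')) - 1.

Lemma Nf_in n l l' : dI (Nf n l l') (- l') (2 ^ (- l) * (n + 1)%:~R).
Proof. by apply/dI_ceil. Qed.

Definition rj (j : int * int) (t : int * int * int) : int * int * int :=
  if (t.1.2 <= j.2)%R then t else (j, Nf t.2 t.1.2 j.2).

Lemma tree_sub t p : tree t p -> dI t.1.1 t.1.2 p.1.1 /\ p.1.2 <= 2 ^ t.1.2.
Proof.
case: t => [[m l] n] [m' [l' [n' [ll' sub _ [xi [_ [s _]]]]]]] /=.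
split; first exact: sub.
by apply: le_trans s _; rewrite (ler_eXz2l (_ : 1 < (2:R))) ?ltr1n.
Qed.

Lemma tree_restrict j t p : tree t p -> strip j p -> tree (rj j t) p.
Proof.
rewrite /rj; case: ifP => // /negbT; rewrite -ltNge.
case: t => [[m l] n] /= lt [m' [l' [n' [ll' sub subn [xi [s1 [s2 xin]]]]]]] [xj [s0 sj]].
have l'j : l' <= j.2.
  have : (2:R) ^ (l' - 1) < 2 ^ j.2 by apply: lt_le_trans sj.
  rewrite (ltr_eXz2l (_ : 1 < (2:R))) ?ltr1n //; lia.
case: j xj sj l'j lt => mj lj /= xj sj l'j lt.
exists m', l', n'; split => //.
- exact: dI_nest l'j xi xj.
- apply: (dI_nest _ _ _ _ _ _ (Nf_in n l lj)); first by rewrite lerN2.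
  by apply: subn; apply: dI_right.
Qed.

Lemma rj_idx j t : stripIdx L j -> treeIdx L t -> treeIdx L (rj j t).
Proof.
by rewrite /rj /stripIdx /treeIdx /=; case: ifP.
Qed.

Lemma tau_rj j t : dI j.1 j.2 `&` dI t.1.1 t.1.2 !=set0 ->
  ((tau (rj j t))%:E = leb (dI j.1 j.2 `&` dI t.1.1 t.1.2))%E.
Proof.
case=> x [xj xt]; rewrite /rj /tau; case: ifP => [le|/negbT].
  rewrite setIidr ?dI_leb //; exact: dI_nest le xt xj.
rewrite -ltNge => lt /=; rewrite setIidl ?dI_leb //; exact: dI_nest (ltW lt) xj xt.
Qed.

End P6.
Arguments Nf_in {R}. Arguments tree_sub {R}. Arguments tree_restrict {R}.
Arguments rj_idx {R}. Arguments tau_rj {R}.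
Arguments rj {R}. Arguments Nf {R}.

Section P7.
Variable R : realType.
Local Notation dI := (@dI R).
Local Notation strip := (@strip R).
Local Notation tree := (@tree R).
Local Notation tau := (@tau R).
Local Notation leb := (@lebesgue_measure R).
Local Notation pds := (@pairwise_disjoint_strips R).
Local Notation rj := (@rj R).
Local Open Scope ereal_scope.

Lemma esum_sub (T : choiceType) (A B : set T) (a : T -> \bar R) : B `<=` A ->
  (forall t, 0 <= a t) -> \esum_(t in B) a t <= \esum_(t in A) a t.
Proof.
move=> BA a0; rewrite [X in X <= _]esum_mkcond [X in _ <= X]esum_mkcond.
apply: le_esum => t _; case: ifPn => [/set_mem hB|_]; last by case: ifP.
by rewrite ifT //; apply: mem_set; apply: BA.
Qed.

Lemma esum_image_le (T T' : choiceType) (A : set T) (f : T -> T') (a : T' -> \bar R) :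
  (forall s, 0 <= a s) -> \esum_(s in f @` A) a s <= \esum_(t in A) a (f t).
Proof.
move=> a0.
have [->|/set0P [t0 At0]] := eqVneq A set0.
  by rewrite image_set0 !esum_set0.
pose g (s : T') : T := match pselect (exists t, A t /\ f t = s) with
  | left h => projT1 (cid h) | right _ => t0 end.
have hg s : (f @` A) s -> A (g s) /\ f (g s) = s.
  case=> t At <-; rewrite /g; case: pselect => [h|[]]; last by exists t.
  by case: (cid h).
rewrite (eq_esum (b := fun s => a (f (g s)))); last by move=> s /hg [_ ->].
rewrite -(esum_image _ g (fun t => a (f t))); last first.
  by move=> x y /set_mem /hg [_ ex] /set_mem /hg [_ ey] e; rewrite -ex -ey e.
by apply: esum_sub => // _ [s /hg [As _] <-].
Qed.

Lemma esum_swap (T1 T2 : choiceType) (I : set T1) (J : set T2) (a : T1 -> T2 -> \bar R) :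
  (forall i j, 0 <= a i j) ->
  \esum_(i in I) \esum_(j in J) a i j = \esum_(j in J) \esum_(i in I) a i j.
Proof.
move=> a0; rewrite (esum_esum (J := fun _ => J)) //.
rewrite (esum_esum (J := fun _ => I)) //.
rewrite (reindex_esum (J `*`` (fun=> I)) (I `*`` (fun=> J)) (fun x => (x.2, x.1))) //.
split => //=.
- by move=> [i j] [/= Ji Ij]; split.
- by move=> [i1 i2] [j1 j2] /= _ _ [-> ->].
- by move=> [i j] [/= Ii Jj]; exists (j, i).
Qed.

Lemma carath (L : int) (P : set (int * int)) (U : set (pt R)) : pds P -> P `<=` stripIdx L ->
  \esum_(j in P) nu L (U `&` strip j) <= nu L (U `&` \bigcup_(j in P) strip j).
Proof.
move=> pd PL.
apply: le_ereal_inf_tmp => _ [J [JL cov ->]].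
pose c := fun (j : int * int) (t : int * int * int) => leb (dI j.1 j.2 `&` dI t.1.1 t.1.2).
have c0 j t : 0 <= c j t by apply: measure_ge0.
have step1 : forall j, P j -> nu L (U `&` strip j) <= \esum_(t in J) c j t.
  move=> j Pj.
  pose J' := [set t | J t /\ dI j.1 j.2 `&` dI t.1.1 t.1.2 !=set0].
  apply: (@le_trans _ _ (\esum_(s in rj j @` J') (tau s)%:E)).
    apply: ereal_inf_lbound; exists (rj j @` J'); split => //.
    - by move=> _ [t [Jt _] <-]; apply: rj_idx; [apply: PL | apply: JL].
    - move=> p [Up sjp].
      have [t Jt tp] := cov p (conj Up (ex_intro2 _ _ j Pj sjp)).
      exists (rj j t); last exact: tree_restrict tp sjp.
      exists t => //; split => //; exists p.1.1; split; first exact: sjp.1.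
      exact: (tree_sub t p tp).1.
  have t0 : forall s, (0 : \bar R) <= (tau s)%:E.
    by move=> s; rewrite lee_fin; apply: ltW; apply: p2_gt0.
  apply: le_trans (esum_image_le _ _ J' (rj j) (fun s => (tau s)%:E) t0) _.
  apply: (@le_trans _ _ (\esum_(t in J') c j t)).
    by apply: le_esum => t [_ ne]; rewrite tau_rj.
  by apply: esum_sub => // t [].
have h1 := @le_esum R _ P (fun j => nu L (U `&` strip j)) (fun j => \esum_(t in J) c j t) step1.
apply: le_trans h1 _.
rewrite esum_swap //.
apply: le_esum => t Jt.
apply: le_trans (disj_sum P (dI t.1.1 t.1.2) (dI_meas _ _) (pds_dI _ pd)) _.
by rewrite dI_leb.
Qed.

End P7.
Arguments carath {R}.

Theorem lemma4p7 (R : realType) (L : int) (Phi K : R) :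
  2 <= Phi -> 1 <= K -> crop_condition L (@calC R L) Phi K.
Proof.
move=> hPhi hK; split; first exact: mu_cov.
move=> calA AL; exists (calM R calA); split.
- by move=> j [].
- split; first exact: M_disj.
  move=> U UY; apply: le_trans (carath L _ U (M_disj _) (fun j h => AL j (proj1 h))) _.
  have n0 : (0 <= nu L (U `&` \bigcup_(j in calM R calA) strip j))%E.
    apply: le_ereal_inf_tmp => y [J [_ _ ->]].
    by apply: esum_ge0 => j _; rewrite lee_fin; exact: ltW (p2_gt0 _).
  rewrite -[X in (X <= _)%E]mul1e; apply: lee_wpmul2r => //.
- by move=> F FY hF; exact: BC_eq.
Qed.
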